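(* Let $r>0$ and $k\geq1$ be an integer. Let $\mathcal N=(G,\beta,r)$ be a multi-path network of length $k$ (nodes $v_0,\dots,v_k$, every arc joins two consecutive nodes $v_{i-1},v_i$), and let $s=v_0$, $t=v_k$. Let $(\pi,f)$ be a potential-based $(s,t)$-flow of value $d>0$ in $\mathcal N$. If $\pi\in[0,\bar\pi]^V$ for some $\bar\pi>0$, then $$U^{\mathcal N}_{s,t}\geq \frac{d}{\sqrt[r]{\bar\pi}}.$$
   Context: A potential-based flow network $\mathcal N=(G,\beta,r)$ consists of a weakly connected directed multigraph $G=(V,A)$ without loops, resistances $\beta\in\mathbb{R}^A_{>0}$ and a degree $r>0$. For a balanced vector $b\in\mathbb{R}^V$ (i.e. $\sum_v b_v=0$), a potential-based $b$-transshipment is a pair $(\pi,f)\in\mathbb{R}^V\times\mathbb{R}^A$ with $\pi_u-\pi_v=\beta_a\,\mathrm{sign}(f_a)|f_a|^r$ for every arc $a=(u,v)$ and $\sum_{a\in\delta^+(v)}f_a-\sum_{a\in\delta^-(v)}f_a=b_v$ for all $v\in V$ ($\delta^+(v)$, $\delta^-(v)$: arcs leaving, resp. entering, $v$). A potential-based $(s,t)$-flow of value $d$ is a potential-based $b$-transshipment with $b=d(\chi_s-\chi_t)$, $\chi_v$ the unit vector of $v$. Such pairs exist for every balanced $b$ and are unique up to adding a constant to $\pi$; let $\pi^{\mathcal N}(b)$ be the potential normalized to have minimum entry $0$. The effective resistance is $R^{\mathcal N}_{s,t}=\pi^{\mathcal N}_s(\chi_s-\chi_t)-\pi^{\mathcal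 N}_t(\chi_s-\chi_t)$ and the effective conductance is $U^{\mathcal N}_{s,t}=(R^{\mathcal N}_{s,t})^{-1/r}$. *)

(* Defs.v *)
From HB Require Import structures.
From mathcomp Require Import all_boot all_order all_algebra.
From mathcomp Require Import all_classical all_reals all_analysis.
From Stdlib Require Import ClassicalEpsilon.
Set Implicit Arguments. Unset Strict Implicit. Unset Printing Implicit Defensive.
Import Order.TTheory GRing.Theory Num.Theory.
Local Open Scope ring_scope.

Section Defs.
Variables (R : realType) (V A : finType) (tl hd : A -> V).

Definition und_adj : rel V :=
  fun u v => [exists a, ((tl a == u) && (hd a == v)) || ((tl a == v) && (hd a == u))].

Definition weakly_connected : Prop := forall u v : V, connect und_adj u v.

Definition loopless : Prop := forall a : A, tl a != hd a.

Definition pb_network (beta : A -> R) (r : R) : Prop :=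
  [/\ loopless, weakly_connected, (forall a, 0 < beta a) & 0 < r].

Definition balanced (b : V -> R) : Prop := \sum_(v : V) b v = 0.

Definition chi (s : V) : V -> R := fun v => (v == s)%:R.

Definition pb_transshipment (beta : A -> R) (r : R) (b : V -> R)
  (pi : V -> R) (f : A -> R) : Prop :=
  (forall a : A, pi (tl a) - pi (hd a) = beta a * (Num.sg (f a) * (`|f a| `^ r)))
  /\ (forall v : V, \sum_(a | tl a == v) f a - \sum_(a | hd a == v) f a = b v).

Definition pb_st_flow (beta : A -> R) (r : R) (s t : V) (d : R)
  (pi : V -> R) (f : A -> R) : Prop :=
  pb_transshipment beta r (fun v => d * (chi s v - chi t v)) pi f.

(* the normalized potential pi^N(b): a potential of a potential-based
   b-transshipment whose minimum entry is 0 (unique by the standard theory) *)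
Definition norm_pot (beta : A -> R) (r : R) (b : V -> R) : V -> R :=
  epsilon (inhabits (fun _ : V => 0))
    (fun pi => (exists f, pb_transshipment beta r b pi f)
               /\ (forall v, 0 <= pi v) /\ (exists v, pi v = 0)).

Definition eff_res (beta : A -> R) (r : R) (s t : V) : R :=
  norm_pot beta r (fun v => chi s v - chi t v) s
  - norm_pot beta r (fun v => chi s v - chi t v) t.

Definition eff_cond (beta : A -> R) (r : R) (s t : V) : R :=
  eff_res beta r s t `^ (- r^-1).

End Defs.

Definition multi_path (k : nat) (A : finType) (tl hd : A -> 'I_k.+1) : Prop :=
  forall a : A, (nat_of_ord (hd a) = (tl a).+1)%N \/ (nat_of_ord (tl a) = (hd a).+1)%N.

(* Main.v *)
Require Import Defs.
From mathcomp Require Import all_boot all_order all_algebra.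
From mathcomp Require Import all_classical all_reals all_analysis.
From mathcomp Require Import ring lra.
From Stdlib Require Import ClassicalEpsilon.
Import Order.TTheory GRing.Theory Num.Theory.
Local Open Scope ring_scope.

Definition phi {R : realType} (r x : R) : R := Num.sg x * (`|x| `^ r).

Lemma phi_mono (R : realType) (r : R) : 0 < r ->
  forall x y : R, x < y -> phi r x < phi r y.
Proof.
move=> r0 x y xy; rewrite /phi.
have [x0|x0] := leP 0 x.
  have y0 : 0 < y by apply: le_lt_trans xy.
  rewrite (gtr0_sg y0) mul1r (gtr0_norm y0).
  move: x0; rewrite le_eqVlt => /orP[/eqP<-|x0].
    by rewrite sgr0 mul0r powR_gt0.
  rewrite (gtr0_sg x0) mul1r (gtr0_norm x0).
  by apply: gt0_ltr_powR => //; rewrite nnegrE ltW.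
rewrite (ltr0_sg x0) mulN1r (ltr0_norm x0).
have [y0|y0] := ltP 0 y.
  rewrite (gtr0_sg y0) mul1r.
  by apply: (lt_le_trans _ (powR_ge0 _ _)); rewrite oppr_lt0 powR_gt0 // oppr_gt0.
move: y0; rewrite le_eqVlt => /orP[/eqP->|y0].
  by rewrite sgr0 mul0r oppr_lt0 powR_gt0 // oppr_gt0.
rewrite (ltr0_sg y0) mulN1r (ltr0_norm y0) ltrN2.
apply: gt0_ltr_powR => //; rewrite ?nnegrE ?oppr_ge0 ?ltW //.
by rewrite ltrN2.
Qed.

Lemma phi_key (R : realType) (r : R) : 0 < r ->
  forall x y : R, x != y -> 0 < (x - y) * (phi r x - phi r y).
Proof.
move=> r0 x y; case: (ltgtP x y) => // xy _.
  have h1 := @phi_mono _ _ r0 _ _ xy.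
  set a := phi r x in h1 *; set b := phi r y in h1 *; nra.
apply: mulr_gt0; rewrite subr_gt0 //; exact: (@phi_mono _ _ r0).
Qed.

Lemma phi_key0 (R : realType) (r : R) : 0 < r ->
  forall x y : R, 0 <= (x - y) * (phi r x - phi r y).
Proof.
move=> r0 x y; have [->|xy] := eqVneq x y; first by rewrite subrr mul0r.
exact/ltW/phi_key.
Qed.

Lemma phi0 (R : realType) (r : R) : phi r 0 = 0.
Proof. by rewrite /phi sgr0 mul0r. Qed.

Lemma sum_comp (R : realType) (V A : finType) (e : A -> V) (q : V -> R) (h : A -> R) :
  \sum_a h a * q (e a) = \sum_v q v * \sum_(a | e a == v) h a.
Proof.
rewrite (partition_big e xpredT) //=; apply: eq_bigr => v _.
rewrite mulr_sumr; apply: eq_bigr => a /eqP ->; by rewrite mulrC.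
Qed.

Lemma energy (R : realType) (V A : finType) (tl hd : A -> V) (q : V -> R) (h : A -> R) :
 \sum_a h a * (q (tl a) - q (hd a)) =
 \sum_v q v * (\sum_(a | tl a == v) h a - \sum_(a | hd a == v) h a).
Proof.
under eq_bigr do rewrite mulrBr.
rewrite sumrB !sum_comp -sumrB; apply: eq_bigr => v _; by rewrite mulrBr.
Qed.
Lemma pb_uniq (R : realType) (V A : finType) (tl hd : A -> V) (beta : A -> R) (r : R)
  (b : V -> R) (p p' : V -> R) (g g' : A -> R) :
  (forall a, 0 < beta a) -> 0 < r -> weakly_connected tl hd ->
  pb_transshipment tl hd beta r b p g -> pb_transshipment tl hd beta r b p' g' ->
  forall u v, p u - p v = p' u - p' v.
Proof.
move=> b0 r0 conn [P1 C1] [P2 C2] u v.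
pose q w := p w - p' w.
have E := @energy _ _ _ tl hd q (fun a => g a - g' a).
have term : forall a, (g a - g' a) * (q (tl a) - q (hd a))
     = beta a * ((g a - g' a) * (phi r (g a) - phi r (g' a))).
  move=> a; rewrite /q.
  have -> : p (tl a) - p' (tl a) - (p (hd a) - p' (hd a)) =
            (p (tl a) - p (hd a)) - (p' (tl a) - p' (hd a)) by ring.
  by rewrite P1 P2 /phi; ring.
have Z : \sum_a (g a - g' a) * (q (tl a) - q (hd a)) = 0.
  rewrite E big1 // => w _.
  rewrite !sumrB.
  have -> : \sum_(a | tl a == w) g a - \sum_(a | tl a == w) g' a -
      (\sum_(a | hd a == w) g a - \sum_(a | hd a == w) g' a) =
      (\sum_(a | tl a == w) g a - \sum_(a | hd a == w) g a) -
      (\sum_(a | tl a == w) g' a - \sum_(a | hd a == w) g' a) by ring.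
  by rewrite C1 C2 subrr mulr0.
have nn : forall a, true -> 0 <= (g a - g' a) * (q (tl a) - q (hd a)).
  move=> a _; rewrite term; apply: mulr_ge0; first exact: ltW.
  exact: phi_key0.
have Z2 := psumr_eq0P nn Z.
have ga : forall a, q (tl a) = q (hd a).
  move=> a; have := Z2 a isT; rewrite term.
  have [e|ne] := eqVneq (g a) (g' a).
    move=> _; move: (P1 a) (P2 a); rewrite /q e => h1 h2; lra.
  move=> /eqP; rewrite mulf_eq0 (gt_eqF (b0 a)) /= => /eqP.
  by move: (@phi_key _ _ r0 _ _ ne) => /gt_eqF /eqP.
have cl : fingraph.closed (und_adj tl hd) [pred w | q w == q u].
  move=> x y /existsP [a /orP [/andP [/eqP <- /eqP <-]|/andP [/eqP <- /eqP <-]]] /=;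
  by rewrite !inE ga.
have := closed_connect cl (conn u v); rewrite !inE eqxx => /esym /eqP.
rewrite /q; lra.
Qed.
Theorem lemma3 (R : realType) (r : R) (k : nat) (A : finType)
  (tl hd : A -> 'I_k.+1) (beta : A -> R) (d pibar : R)
  (pi : 'I_k.+1 -> R) (f : A -> R) :
  (1 <= k)%N ->
  pb_network tl hd beta r ->
  multi_path tl hd ->
  pb_st_flow tl hd beta r ord0 ord_max d pi f ->
  0 < d ->
  0 < pibar ->
  (forall v, 0 <= pi v <= pibar) ->
  eff_cond tl hd beta r ord0 ord_max >= d / pibar `^ r^-1.
Proof.
move=> k1 [loopl conn beta0 r0] mp [Hpot Hcons] d0 pb0 Hpi.
have dr0 : 0 < d `^ r by apply: powR_gt0.
pose p v := pi v / d `^ r.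
pose g a := f a / d.
pose b := fun v : 'I_k.+1 => chi R ord0 v - chi R ord_max v.
have Tg : pb_transshipment tl hd beta r b p g.
  split.
    move=> a; rewrite /p /g -mulrBl Hpot.
    have -> : Num.sg (f a / d) = Num.sg (f a).
      have di : 0 < d^-1 by rewrite invr_gt0.
      by rewrite sgrM (gtr0_sg di) mulr1.
    have di : 0 < d^-1 by rewrite invr_gt0.
    rewrite normrM powRM // (gtr0_norm di).
    have -> : d^-1 `^ r = (d `^ r)^-1.
      by rewrite -powR_inv1 ?ltW // -powRrM mulNr mul1r powRN.
    ring.
  move=> v; rewrite /g -!mulr_suml -mulrBl Hcons /b mulrC mulrA mulVf ?gt_eqF //.
  by rewrite mul1r.
pose P := fun pi0 : 'I_k.+1 -> R => (exists f, pb_transshipment tl hd beta r b pi0 f)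
   /\ (forall v, 0 <= pi0 v) /\ (exists v, pi0 v = 0).
have ex : exists pi0, P pi0.
  case: (@arg_minP _ _ _ ord0 xpredT p isT) => i0 _ Hmin.
  exists (fun v => p v - p i0); split; last split.
  - exists g; case: Tg => T1 T2; split => // a; rewrite -T1; ring.
  - by move=> v; rewrite subr_ge0; apply: Hmin.
  - by exists i0; rewrite subrr.
have [[fs Ts] _] := @epsilon_spec _ (inhabits (fun _ => 0)) P ex.
have Eeq : eff_res tl hd beta r ord0 ord_max = p ord0 - p ord_max.
  rewrite /eff_res /norm_pot -/b -/P.
  exact: (@pb_uniq _ _ _ _ _ _ _ _ _ _ _ _ beta0 r0 conn Ts Tg ord0 ord_max).
case: Tg => T1 T2.
have En := @energy _ _ _ tl hd p g.
have Rb : \sum_v p v * (\sum_(a | tl a == v) g a - \sum_(a | hd a == v) g a)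
     = p ord0 - p ord_max.
  under eq_bigr do rewrite T2.
  rewrite /b /chi; under eq_bigr do rewrite mulrBr.
  have S1 : forall j : 'I_k.+1, \sum_v p v * (v == j)%:R = p j.
    move=> j; rewrite (bigD1 j) //= eqxx mulr1 big1 ?addr0 //.
    by move=> v /negbTE ->; rewrite mulr0.
  by rewrite sumrB !S1.
have term : forall a, g a * (p (tl a) - p (hd a))
     = beta a * ((g a - 0) * (phi r (g a) - phi r 0)).
  by move=> a; rewrite T1 phi0 /phi subr0 subr0; ring.
have nn : forall a, true -> 0 <= g a * (p (tl a) - p (hd a)).
  move=> a _; rewrite term; apply: mulr_ge0; first exact: ltW.
  exact: phi_key0.
have s0m : ord0 != ord_max :> 'I_k.+1.
  apply/eqP => /(congr1 val) /= h; move: k1; by rewrite -h.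
have Epos : 0 < p ord0 - p ord_max.
  have Esum : \sum_a g a * (p (tl a) - p (hd a)) = p ord0 - p ord_max by rewrite En Rb.
  rewrite -Esum lt_neqAle sumr_ge0 // andbT.
  apply/eqP => /esym Z.
  have Z2 := psumr_eq0P nn Z.
  have g0 : forall a, g a = 0.
    move=> a; apply/eqP; apply: contraT => ne.
    move: (Z2 a isT); rewrite term => /eqP; rewrite mulf_eq0 (gt_eqF (beta0 a)) /=.
    by move=> /eqP E0; move: (@phi_key _ _ r0 _ _ ne); rewrite E0 ltxx.
  move: (T2 ord0); rewrite !big1; last 2 first.
  - by move=> a _; apply: g0.
  - by move=> a _; apply: g0.
  by rewrite subrr /b /chi eqxx (negbTE s0m) subr0 => /eqP; rewrite eq_sym oner_eq0.
have Ele : p ord0 - p ord_max <= pibar / d `^ r.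
  rewrite /p -mulrBl; apply: ler_wpM2r; first by rewrite invr_ge0 ltW.
  move: (Hpi ord0) (Hpi ord_max) => /andP [h1 h2] /andP [h3 h4]; lra.
set E := p ord0 - p ord_max in Epos Ele.
rewrite /eff_cond Eeq -/E powRN.
have Ep : 0 < E `^ r^-1 by apply: powR_gt0.
have dd : ((d `^ r)^-1) `^ r^-1 = d^-1.
  rewrite -powR_inv1 ?powR_ge0 // -!powRrM mulN1r mulrN mulfV ?gt_eqF //.
  by rewrite powR_inv1 ?ltW.
have Ele2 : E `^ r^-1 <= pibar `^ r^-1 / d.
  have hr : 0 <= r^-1 by rewrite invr_ge0 ltW.
  have hE : E \in Num.nneg by rewrite nnegrE ltW.
  have hP : pibar / d `^ r \in Num.nneg by rewrite nnegrE divr_ge0 ?ltW.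
  apply: (le_trans (ge0_ler_powR hr hE hP Ele)).
  have h1 : 0 <= pibar by apply: ltW.
  have h2 : 0 <= (d `^ r)^-1 by rewrite invr_ge0 powR_ge0.
  by rewrite (powRM _ h1 h2) dd.
rewrite -invf_div lef_pV2 ?posrE ?divr_gt0 ?powR_gt0 //.
Qed.
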